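(* Let $\mathbb{M}$ be a flow monoid with idempotent addition, and let $h_1,h_2$ be flow graphs with the same node set $X$ whose edge functions are continuous and distributive. Then $\mathsf{tf}(h_1)=\mathsf{tf}(h_2)$ if and only if path replacement of $h_1$ by $h_2$ and path replacement of $h_2$ by $h_1$ both hold.
   Context: A flow monoid is a commutative monoid $(\mathbb{M},+,0)$ such that $n\le m :\iff \exists o.\ m=n+o$ is a partial order in which every ascending chain $K$ has a least upper bound $\bigsqcup K$, and $n+\bigsqcup K=\bigsqcup(n+K)$. Addition is idempotent if $m+m=m$. A function is continuous if it commutes with least upper bounds of ascending chains, and distributive if $f(m+n)=f(m)+f(n)$ and $f(0)=0$. Infinite sums denote least upper bounds of finite partial sums; sums and $\le$ on functions are pointwise. A flow graph is $h=(X,E,\mathit{in})$ with $X\subseteq\mathbb{N}$ finite, $E:X\times\mathbb{N}\to$ continuous functions $\mathbb{M}\to\mathbb{M}$, $\mathit{in}:(\mathbb{N}\setminus X)\times X\to\mathbb{M}$; $\mathit{in}_x=\sum_{y\notin X}\mathit{in}(y,x)$; the flow is the least $\mathit{flow}:X\to\mathbb{M}$ with $\mathit{flow}(x)=\mathit{in}_x+\sum_{y\in X}E(y,x)(\mathit{flow}(y))$; outflow $\mathit{out}(x,y)=E(x,y)(\mathit{flow}(x))$. The transfer function $\mathsf{tf}(h)$ maps each inflow $\mathit{in}'$ to the outflow of $(X,E,\mathit{in}')$; $\mathsf{tf}(h_1)=\mathsf{tf}(h_2)$ means equality for all inflows. A path through $h$ is $p=x_0\cdots x_nz$ with $x_i\in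 X$, $z\in\mathbb{N}\setminus X$; $\mathrm{Paths}_h(x\to(y,z))$ is the set of such paths with $x_0=x$, $x_n=y$, final element $z$; $E_p=E(x_n,z)\circ\cdots\circ E(x_0,x_1)$; $E_P=\sum_{q\in P}E_q$. $\mathrm{Out}(h_1,h_2)=\{x\in X\mid\exists z.\ h_1.E(x,z)\neq h_2.E(x,z)\}$. Path replacement of $h_1$ by $h_2$: for every $x\in\mathrm{Out}(h_1,h_2)$, $y\in X$, $z\in\mathbb{N}\setminus X$ and every $p\in\mathrm{Paths}_{h_1}(x\to(y,z))$ there is $P\subseteq\mathrm{Paths}_{h_2}(x\to(y,z))$ with $E_p\le E_P$. *)

(* Defs.v *)
From mathcomp Require Import all_boot.
From mathcomp Require Import finmap.
Set Implicit Arguments.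
Unset Strict Implicit.
Unset Printing Implicit Defensive.
Local Open Scope fset_scope.

Section FlowMonoid.
Variables (M : Type) (add : M -> M -> M) (zero : M).

Definition mle (n m : M) : Prop := exists o, m = add n o.

Definition is_lub (S : M -> Prop) (l : M) : Prop :=
  (forall v, S v -> mle v l) /\ (forall u, (forall v, S v -> mle v u) -> mle l u).

Definition asc_chain (k : nat -> M) : Prop := forall i, mle (k i) (k i.+1).

Definition chain_set (k : nat -> M) : M -> Prop := fun v => exists i, v = k i.

Definition flow_monoid : Prop :=
  [/\ (forall a b c, add a (add b c) = add (add a b) c),
      (forall a b, add a b = add b a) /\
      (forall a, add zero a = a),
      (* mle is a partial order (reflexivity and transitivity are automatic) *)
      (forall a b, mle a b -> mle b a -> a = b),
      (forall k, asc_chain k -> exists l, is_lub (chain_set k) l) &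
      (forall n k l, asc_chain k -> is_lub (chain_set k) l ->
          is_lub (chain_set (fun i => add n (k i))) (add n l))].

Definition idempotent_add : Prop := forall m, add m m = m.

Definition continuous_fun (f : M -> M) : Prop :=
  forall k l, asc_chain k -> is_lub (chain_set k) l ->
    is_lub (chain_set (fun i => f (k i))) (f l).

Definition distributive_fun (f : M -> M) : Prop :=
  (forall m n, f (add m n) = add (f m) (f n)) /\ f zero = zero.

Definition lsum (l : seq M) : M := foldr add zero l.

Definition isum (I : eqType) (P : I -> Prop) (g : I -> M) (s : M) : Prop :=
  is_lub (fun v => exists l : seq I, [/\ uniq l, (forall i, i \in l -> P i) &
                                         v = lsum (map g l)]) s.

End FlowMonoid.

Record flow_graph (M : Type) := FlowGraph {
  fg_X  : {fset nat};
  fg_E  : nat -> nat -> M -> M;   (* only used on X x N *)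
  fg_in : nat -> nat -> M         (* only used on (N \ X) x X *)
}.

Section Flows.
Variables (M : Type) (add : M -> M -> M) (zero : M).

(* f : X -> M (values outside X irrelevant) satisfies the flow equation
   f(x) = in_x + sum_{y in X} E(y,x)(f(y)),  in_x = sum_{y notin X} in(y,x) *)
Definition flow_eq (X : {fset nat}) (E : nat -> nat -> M -> M)
    (inf : nat -> nat -> M) (f : nat -> M) : Prop :=
  forall x, x \in X ->
    exists ix, isum add zero (fun y : nat => y \notin X) (fun y => inf y x) ix /\
      f x = add ix (lsum add zero [seq E y x (f y) | y <- enum_fset X]).

Definition is_flow X E inf (f : nat -> M) : Prop :=
  flow_eq X E inf f /\
  forall f', flow_eq X E inf f' -> forall x, x \in X -> mle add (f x) (f' x).

(* tf(h1) = tf(h2): for every inflow in', the outflows of (X,E1,in') and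
   (X,E2,in') coincide, out(x,y) = E(x,y)(flow(x)) for x in X, y notin X *)
Definition tf_eq (h1 h2 : flow_graph M) : Prop :=
  forall inf f1 f2,
    is_flow (fg_X h1) (fg_E h1) inf f1 ->
    is_flow (fg_X h2) (fg_E h2) inf f2 ->
    forall x y, x \in fg_X h1 -> y \notin fg_X h1 ->
      fg_E h1 x y (f1 x) = fg_E h2 x y (f2 x).

(* A path x0 ... xn z is represented by the list x0 :: x1 :: ... :: xn :: [z].
   path_fun E a r = E_p for p = a :: r, i.e. E(xn,z) o ... o E(x0,x1). *)
Fixpoint path_fun (E : nat -> nat -> M -> M) (a : nat) (r : seq nat) : M -> M :=
  match r with
  | [::] => id
  | b :: r' => fun m => path_fun E b r' (E a b m)
  end.

Definition E_path (E : nat -> nat -> M -> M) (p : seq nat) : M -> M :=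
  match p with
  | [::] => id
  | a :: r => path_fun E a r
  end.

Definition is_path (X : {fset nat}) (x y z : nat) (p : seq nat) : Prop :=
  exists xs : seq nat,
    [/\ p = x :: rcons xs z, x \in X, (forall w, w \in xs -> w \in X),
        last x xs = y & z \notin X].

Definition in_Out (h1 h2 : flow_graph M) (x : nat) : Prop :=
  x \in fg_X h1 /\ exists z, fg_E h1 x z <> fg_E h2 x z.

Definition path_replacement (h1 h2 : flow_graph M) : Prop :=
  forall x y z p,
    in_Out h1 h2 x -> y \in fg_X h1 -> z \notin fg_X h1 ->
    is_path (fg_X h1) x y z p ->
    exists P : seq nat -> Prop,
      (forall q, P q -> is_path (fg_X h2) x y z q) /\
      forall m, exists s,
        isum add zero P (fun q => E_path (fg_E h2) q m) s /\
        mle add (E_path (fg_E h1) p m) s.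

End Flows.

(* Main.v *)
Require Import Defs.
From mathcomp Require Import all_boot.
From mathcomp Require Import finmap.
From Stdlib Require Import Classical IndefiniteDescription.
Set Implicit Arguments.
Unset Strict Implicit.
Unset Printing Implicit Defensive.
Local Open Scope fset_scope.

Definition JSL (M : Type) (add : M -> M -> M) (zero : M) : Prop :=
  [/\ (forall a b c, add a (add b c) = add (add a b) c),
      (forall a b, add a b = add b a), (forall a, add zero a = a),
      (forall a b, mle add a b -> mle add b a -> a = b) & (forall a, add a a = a)].

Definition good (M : Type) (add : M -> M -> M) (zero : M) (f : M -> M) :=
  continuous_fun add f /\ distributive_fun add zero f.

Lemma choice_fun (A B : Type) (P : A -> B -> Prop) :
  (forall x, exists y, P x y) -> exists f : A -> B, forall x, P x (f x).
Proof.
move=> H; exists (fun x => proj1_sig (constructive_indefinite_description _ (H x))).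
by move=> x; case: (constructive_indefinite_description _ (H x)).
Qed.

Lemma le_iff M (add : M -> M -> M) zero (J : JSL add zero) a b :
  mle add a b <-> add a b = b.
Proof.
case: J => A C Z An I; split.
  by case=> o ->; rewrite A I.
by move=> <-; exists b.
Qed.

Lemma le_refl M (add : M -> M -> M) zero (J : JSL add zero) a : mle add a a.
Proof. by apply/(le_iff J); case: J. Qed.

Lemma le_trans M (add : M -> M -> M) zero (J : JSL add zero) a b c :
  mle add a b -> mle add b c -> mle add a c.
Proof.
move=> /(le_iff J) H1 /(le_iff J) H2; apply/(le_iff J).
case: J => A _ _ _ _; by rewrite -H2 A H1.
Qed.

Lemma le0 M (add : M -> M -> M) zero (J : JSL add zero) a : mle add zero a.
Proof. by exists a; case: J => _ _ ->. Qed.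

Lemma le_addl M (add : M -> M -> M) zero (J : JSL add zero) a b : mle add a (add a b).
Proof. by exists b. Qed.

Lemma le_addr M (add : M -> M -> M) zero (J : JSL add zero) a b : mle add b (add a b).
Proof. by exists a; case: J => _ C _ _ _; rewrite C. Qed.

Lemma add_lub M (add : M -> M -> M) zero (J : JSL add zero) a b u :
  mle add a u -> mle add b u -> mle add (add a b) u.
Proof.
move=> /(le_iff J) H1 /(le_iff J) H2; apply/(le_iff J).
case: J => A _ _ _ _; by rewrite -A H2 H1.
Qed.

Lemma add_mono M (add : M -> M -> M) zero (J : JSL add zero) a b a' b' :
  mle add a a' -> mle add b b' -> mle add (add a b) (add a' b').
Proof.
move=> H1 H2; apply: (add_lub J).
  exact: (le_trans J H1 (le_addl J _ _)).
exact: (le_trans J H2 (le_addr J _ _)).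
Qed.

Lemma lub_unique M (add : M -> M -> M) zero (J : JSL add zero) S l l' :
  is_lub add S l -> is_lub add S l' -> l = l'.
Proof.
case=> U1 L1 [U2 L2]; case: J => _ _ _ An _; apply: An; [exact: L1 | exact: L2].
Qed.

Lemma lsum_le M (add : M -> M -> M) zero (J : JSL add zero) (I : eqType)
  (F : I -> M) (s : seq I) u :
  (forall i, i \in s -> mle add (F i) u) -> mle add (lsum add zero (map F s)) u.
Proof.
elim: s => [|i s IH] H /=; first exact: (le0 J).
apply: (add_lub J); first by apply: H; rewrite inE eqxx.
by apply: IH => j Hj; apply: H; rewrite inE Hj orbT.
Qed.

Lemma mem_lsum M (add : M -> M -> M) zero (J : JSL add zero) (I : eqType)
  (F : I -> M) (s : seq I) i :
  i \in s -> mle add (F i) (lsum add zero (map F s)).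
Proof.
elim: s => [|j s IH] //=; rewrite inE => /orP [/eqP ->|H].
  exact: (le_addl J).
exact: (le_trans J (IH H) (le_addr J _ _)).
Qed.

Lemma lsum_mono M (add : M -> M -> M) zero (J : JSL add zero) (I : eqType)
  (F G : I -> M) (s : seq I) :
  (forall i, i \in s -> mle add (F i) (G i)) ->
  mle add (lsum add zero (map F s)) (lsum add zero (map G s)).
Proof.
move=> H; apply: (lsum_le J) => i Hi.
exact: (le_trans J (H i Hi) (mem_lsum J G Hi)).
Qed.

Lemma good_mono M (add : M -> M -> M) zero (J : JSL add zero) f a b :
  good add zero f -> mle add a b -> mle add (f a) (f b).
Proof.
move=> [_ [D _]] /(le_iff J) H; apply/(le_iff J); by rewrite -D H.
Qed.

Lemma good_id M (add : M -> M -> M) zero : good add zero id.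
Proof. by split. Qed.

Lemma good_comp M (add : M -> M -> M) zero f g :
  good add zero f -> good add zero g -> good add zero (fun m => g (f m)).
Proof.
move=> [Cf [Df Zf]] [Cg [Dg Zg]]; split; last by split; [move=> a b; rewrite Df Dg | rewrite Zf Zg].
move=> k l Hk Hl; have := Cf k l Hk Hl => Hf.
apply: Cg => // i; have [_ L] := Hf. 
case: (Hk i) => o Ho; exists (f o); by rewrite Ho Df.
Qed.

Lemma lub_shift M (add : M -> M -> M) zero (J : JSL add zero) k l :
  asc_chain add k -> is_lub add (chain_set k) l ->
  is_lub add (chain_set (fun i => k i.+1)) l.
Proof.
move=> Hk [U L]; split.
  by move=> v [i ->]; apply: U; exists i.+1.
move=> u Hu; apply: L => v [i ->].
apply: (le_trans J (Hk i)); apply: Hu; by exists i.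
Qed.

Lemma lub_add M (add : M -> M -> M) zero (J : JSL add zero) a b la lb :
  is_lub add (chain_set a) la -> is_lub add (chain_set b) lb ->
  is_lub add (chain_set (fun i => add (a i) (b i))) (add la lb).
Proof.
move=> [Ua La] [Ub Lb]; split.
  move=> v [i ->]; apply: (add_mono J); [apply: Ua | apply: Ub]; by exists i.
move=> u Hu; apply: (add_lub J).
  apply: La => v [i ->]; apply: (le_trans J (le_addl J _ (b i))); apply: Hu; by exists i.
apply: Lb => v [i ->]; apply: (le_trans J (le_addr J (a i) _)); apply: Hu; by exists i.
Qed.

Lemma lub_const M (add : M -> M -> M) zero (J : JSL add zero) c :
  is_lub add (chain_set (fun _ : nat => c)) c.
Proof.
split; first by move=> v [i ->]; apply: (le_refl J).
by move=> u Hu; apply: Hu; exists 0.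
Qed.

Lemma lub_lsum M (add : M -> M -> M) zero (J : JSL add zero) (s : seq nat)
  (a : nat -> nat -> M) la :
  (forall y, y \in s -> is_lub add (chain_set (a y)) (la y)) ->
  is_lub add (chain_set (fun i => lsum add zero (map (fun y => a y i) s)))
    (lsum add zero (map la s)).
Proof.
elim: s => [|y s IH] H /=; first exact: (lub_const J).
apply: (lub_add J); first by apply: H; rewrite inE eqxx.
by apply: IH => w Hw; apply: H; rewrite inE Hw orbT.
Qed.

Lemma path_good M (add : M -> M -> M) zero (X : {fset nat}) E
  (HE : forall a b, a \in X -> good add zero (E a b)) xs a z :
  a \in X -> (forall w, w \in xs -> w \in X) ->
  good add zero (path_fun E a (rcons xs z)).
Proof.
elim: xs a => [|b xs IH] a Ha Hxs /=.
  exact: HE.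
apply: (good_comp (HE a b Ha)); apply: IH.
  by apply: Hxs; rewrite inE eqxx.
by move=> w Hw; apply: Hxs; rewrite inE Hw orbT.
Qed.

Lemma is_path_good M (add : M -> M -> M) zero (X : {fset nat}) E
  (HE : forall a b, a \in X -> good add zero (E a b)) w y z p :
  is_path X w y z p -> good add zero (E_path E p).
Proof. by case=> xs [-> Hw Hxs _ _]; exact: (path_good HE). Qed.

Lemma is_path_cons (X : {fset nat}) w w' y z p :
  w' \in X -> is_path X w y z p -> is_path X w' y z (w' :: p).
Proof.
move=> Hw' [xs [-> Hw Hxs Hl Hz]]; exists (w :: xs); split => //.
by move=> u; rewrite inE => /orP [/eqP ->|/Hxs].
Qed.

Lemma E_path_cons M (E : nat -> nat -> M -> M) (X : {fset nat}) w w' y z p v :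
  is_path X w y z p -> E_path E (w' :: p) v = E_path E p (E w' w v).
Proof. by case=> xs [-> _ _ _ _]. Qed.

Fixpoint iter M (add : M -> M -> M) (zero : M) (X : {fset nat})
  (E : nat -> nat -> M -> M) (ixf : nat -> M) (k : nat) : nat -> M :=
  match k with
  | 0 => fun _ => zero
  | k'.+1 => fun x => add (ixf x)
      (lsum add zero [seq E y x (iter add zero X E ixf k' y) | y <- enum_fset X])
  end.

Lemma iter_chain M (add : M -> M -> M) zero (J : JSL add zero)
  (X : {fset nat}) E (HE : forall a b, a \in X -> good add zero (E a b)) ixf x :
  asc_chain add (fun k => iter add zero X E ixf k x).
Proof.
  move=> k; elim: k x => [|k IH] x; first exact: (le0 J).
  apply: (add_mono J); first exact: (le_refl J).
  apply: (lsum_mono J) => y Hy; apply: (good_mono J (HE y x Hy)); exact: IH.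
Qed.

Lemma kleene M (add : M -> M -> M) zero (J : JSL add zero)
  (CL : forall k, asc_chain add k -> exists l, is_lub add (chain_set k) l)
  (X : {fset nat}) E (HE : forall a b, a \in X -> good add zero (E a b))
  inf ixf
  (hix : forall x, x \in X ->
     isum add zero (fun y : nat => y \notin X) (fun y => inf y x) (ixf x)) :
  exists g, is_flow add zero X E inf g /\
    forall x, is_lub add (chain_set (fun k => iter add zero X E ixf k x)) (g x).
Proof.
have Hch := iter_chain J HE ixf.
have [g Hg] := choice_fun (fun x => CL _ (Hch x)).
exists g; split => //; split.
  move=> x Hx; exists (ixf x); split; first exact: hix.
  apply: (lub_unique J (lub_shift J (Hch x) (Hg x))).
  apply: (lub_add J (lub_const J (ixf x))).
  apply: (lub_lsum J (a := fun y i => E y x (iter add zero X E ixf i y))) => y Hy.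
  exact: ((HE y x Hy).1 _ _ (Hch y) (Hg y)).
move=> f' Hf' x Hx; apply: (Hg x).2 => v [k ->].
elim: k x Hx => [|k IH] x Hx; first exact: (le0 J).
have [ix' [Hi' ->]] := Hf' x Hx.
rewrite -(lub_unique J (hix x Hx) Hi') /=.
apply: (add_mono J); first exact: (le_refl J).
apply: (lsum_mono J) => y Hy; apply: (good_mono J (HE y x Hy)); exact: IH.
Qed.

Definition Rp M (add : M -> M -> M) (X : {fset nat}) (E : nat -> nat -> M -> M)
  (y z : nat) (B : M) (w : nat) (v : M) : Prop :=
  forall p, is_path X w y z p -> mle add (E_path E p v) B.

Lemma main_bound M (add : M -> M -> M) zero (J : JSL add zero)
  (CL : forall k, asc_chain add k -> exists l, is_lub add (chain_set k) l)
  (X : {fset nat}) E (HE : forall a b, a \in X -> good add zero (E a b))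
  inf f (Hf : is_flow add zero X E inf f) y z B
  (Hbase : forall w ix, w \in X ->
     isum add zero (fun a : nat => a \notin X) (fun a => inf a w) ix ->
     Rp add X E y z B w ix)
  (Hstep : forall w' w v, w' \in X -> w \in X ->
     Rp add X E y z B w' v -> Rp add X E y z B w (E w' w v)) :
  forall w, w \in X -> Rp add X E y z B w (f w).
Proof.
have [ixf Hixf] : exists ixf : nat -> M, forall x, x \in X ->
    isum add zero (fun a : nat => a \notin X) (fun a => inf a x) (ixf x).
  apply: (choice_fun (P := fun x ix => x \in X ->
    isum add zero (fun a : nat => a \notin X) (fun a => inf a x) ix)) => x.
  case Hx: (x \in X); last by exists zero.
  by have [ix [Hi _]] := Hf.1 x Hx; exists ix.
have [g [Hgf Hgl]] := kleene J CL HE Hixf.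
have Hfg := Hf.2 g Hgf.1.
have Rdown : forall w a b, mle add a b -> Rp add X E y z B w b -> Rp add X E y z B w a.
  move=> w a b Hab H p Hp.
  exact: (le_trans J (good_mono J (is_path_good HE Hp) Hab) (H p Hp)).
have Radd : forall w a b, Rp add X E y z B w a -> Rp add X E y z B w b ->
    Rp add X E y z B w (add a b).
  move=> w a b Ha Hb p Hp; rewrite (is_path_good HE Hp).2.1.
  exact: (add_lub J (Ha p Hp) (Hb p Hp)).
have R0 : forall w, Rp add X E y z B w zero.
  move=> w p Hp; rewrite (is_path_good HE Hp).2.2; exact: (le0 J).
have Rlsum : forall w (s : seq nat) (F : nat -> M),
    (forall u, u \in s -> Rp add X E y z B w (F u)) ->
    Rp add X E y z B w (lsum add zero (map F s)).
  move=> w; elim=> [|u s IH] F H /=; first exact: R0.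
  apply: Radd; first by apply: H; rewrite inE eqxx.
  by apply: IH => u' Hu'; apply: H; rewrite inE Hu' orbT.
have Rlub : forall w k l, asc_chain add k -> is_lub add (chain_set k) l ->
    (forall i, Rp add X E y z B w (k i)) -> Rp add X E y z B w l.
  move=> w k l Hk Hl H p Hp.
  apply: ((is_path_good HE Hp).1 k l Hk Hl).2 => v [i ->]; exact: H.
have Riter : forall k w, w \in X -> Rp add X E y z B w (iter add zero X E ixf k w).
  elim=> [|k IH] w Hw; first exact: R0.
  apply: Radd; first exact: Hbase w _ Hw (Hixf w Hw).
  apply: Rlsum => u Hu; apply: Hstep => //; exact: IH.
move=> w Hw; apply: (Rdown w _ _ (Hfg w Hw)).
exact: (Rlub w _ _ (iter_chain J HE ixf w) (Hgl w) (fun i => Riter i w Hw)).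
Qed.

Lemma Rp_step M (add : M -> M -> M) (X : {fset nat}) E y z B w' w v :
  w' \in X -> Rp add X E y z B w' v -> Rp add X E y z B w (E w' w v).
Proof.
move=> Hw' H p Hp; move: (H _ (is_path_cons Hw' Hp)); by case: Hp => xs [-> _ _ _ _].
Qed.

Lemma flow_in M (add : M -> M -> M) zero (J : JSL add zero) (X : {fset nat}) E inf f x ix :
  flow_eq add zero X E inf f -> x \in X ->
  isum add zero (fun a : nat => a \notin X) (fun a => inf a x) ix -> mle add ix (f x).
Proof.
move=> Hf Hx Hi; have [ix' [Hi' ->]] := Hf x Hx.
rewrite (lub_unique J Hi Hi'); exact: (le_addl J).
Qed.

Lemma soundness M (add : M -> M -> M) zero (J : JSL add zero) (X : {fset nat}) E
  (HE : forall a b, a \in X -> good add zero (E a b)) inf f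
  (Hf : flow_eq add zero X E inf f) z :
  forall xs w, w \in X -> (forall u, u \in xs -> u \in X) ->
  mle add (E_path E (w :: rcons xs z) (f w)) (E (last w xs) z (f (last w xs))).
Proof.
elim=> [|b xs IH] w Hw Hxs /=; first exact: (le_refl J).
have Hb : b \in X by apply: Hxs; rewrite inE eqxx.
have Hxs' : forall u, u \in xs -> u \in X by move=> u Hu; apply: Hxs; rewrite inE Hu orbT.
apply: (le_trans J _ (IH b Hb Hxs')).
apply: (good_mono J (path_good HE z Hb Hxs')).
have [ix [_ ->]] := Hf b Hb.
apply: (le_trans J _ (le_addr J _ _)).
exact: (mem_lsum J (fun y => E y b (f y)) (Hw : w \in enum_fset X)).
Qed.

Lemma dir_le M (add : M -> M -> M) zero (J : JSL add zero)
  (CL : forall k, asc_chain add k -> exists l, is_lub add (chain_set k) l)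
  (X : {fset nat}) E1 E2
  (HE1 : forall a b, a \in X -> good add zero (E1 a b))
  (HE2 : forall a b, a \in X -> good add zero (E2 a b))
  inf f1 f2 (Hf1 : is_flow add zero X E1 inf f1) (Hf2 : is_flow add zero X E2 inf f2)
  (HPR : forall w y' z' p, w \in X -> (exists z, E1 w z <> E2 w z) ->
     y' \in X -> z' \notin X -> is_path X w y' z' p ->
     exists P : seq nat -> Prop, (forall q, P q -> is_path X w y' z' q) /\
       forall m, exists s, isum add zero P (fun q => E_path E2 q m) s /\
         mle add (E_path E1 p m) s) :
  forall x y, x \in X -> y \notin X -> mle add (E1 x y (f1 x)) (E2 x y (f2 x)).
Proof.
move=> x y Hx Hy; set B := E2 x y (f2 x).
have Hout : forall xs w v, w \in X -> (forall u, u \in xs -> u \in X) ->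
    last w xs = x -> Rp add X E2 x y B w v -> (exists z, E1 w z <> E2 w z) ->
    mle add (E_path E1 (w :: rcons xs y) v) B.
  move=> xs w v Hw Hxs Hl HS Ho.
  have Hp : is_path X w x y (w :: rcons xs y) by exists xs.
  have [P [HP HPs]] := HPR _ _ _ _ Hw Ho Hx Hy Hp.
  have [s [Hs Hle]] := HPs v.
  apply: (le_trans J Hle); apply: Hs.2 => u [l [_ Hl' ->]].
  apply: (lsum_le J) => q Hq; exact: HS q (HP q (Hl' q Hq)).
have S2Q : forall xs w v, w \in X -> (forall u, u \in xs -> u \in X) ->
    last w xs = x -> Rp add X E2 x y B w v ->
    mle add (E_path E1 (w :: rcons xs y) v) B.
  elim=> [|b xs IH] w v Hw Hxs Hl HS;
    (case: (classic (exists z, E1 w z <> E2 w z)) => [Ho|Hno];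
      [exact: Hout | have Heq : forall z, E1 w z = E2 w z by
        move=> z; apply: NNPP => Hne; apply: Hno; exists z]).
    rewrite /= Heq; apply: (HS [:: w; y]); by exists [::].
  rewrite /= Heq; apply: (IH b).
  - by apply: Hxs; rewrite inE eqxx.
  - by move=> u Hu; apply: Hxs; rewrite inE Hu orbT.
  - exact: Hl.
  - exact: (Rp_step Hw HS).
have H : Rp add X E1 x y B x (f1 x).
  apply: (main_bound J CL HE1 Hf1) => //; last first.
    move=> w' w v Hw' _; exact: Rp_step.
  move=> w ix Hw Hi p [xs [-> _ Hxs Hl _]]; apply: S2Q => //.
  move=> q [xs2 [-> _ Hxs2 Hl2 _]].
  apply: (le_trans J (good_mono J (path_good HE2 y Hw Hxs2) (flow_in J Hf2.1 Hw Hi))).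
  have := soundness J HE2 Hf2.1 y Hw Hxs2; by rewrite Hl2.
apply: (H [:: x; y]); by exists [::].
Qed.

Lemma tf_pr M (add : M -> M -> M) zero (J : JSL add zero)
  (CL : forall k, asc_chain add k -> exists l, is_lub add (chain_set k) l)
  (X : {fset nat}) E1 E2
  (HE1 : forall a b, a \in X -> good add zero (E1 a b))
  (HE2 : forall a b, a \in X -> good add zero (E2 a b))
  (HTF : forall inf f1 f2, is_flow add zero X E1 inf f1 ->
     is_flow add zero X E2 inf f2 ->
     forall x y, x \in X -> y \notin X -> E1 x y (f1 x) = E2 x y (f2 x)) :
  forall x y z p, x \in X -> y \in X -> z \notin X -> is_path X x y z p ->
  exists P : seq nat -> Prop, (forall q, P q -> is_path X x y z q) /\
    forall m, exists s, isum add zero P (fun q => E_path E2 q m) s /\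
      mle add (E_path E1 p m) s.
Proof.
move=> x y z p Hx Hy Hz Hp; exists (is_path X x y z); split => // m.
pose inf := fun a b => if (a == z) && (b == x) then m else zero.
pose ixf := fun w => if w == x then m else zero.
have hix : forall w, w \in X ->
    isum add zero (fun a : nat => a \notin X) (fun a => inf a w) (ixf w).
  move=> w _; split.
    move=> v [l [_ _ ->]]; apply: (lsum_le J) => a _; rewrite /inf /ixf.
    case: (a == z); case: (w == x) => /=; first exact: (le_refl J); exact: (le0 J).
  move=> u Hu.
  apply: (le_trans J _ (Hu (lsum add zero [seq inf a w | a <- [:: z]]) _)).
    have -> : ixf w = inf z w by rewrite /inf /ixf eqxx.
    exact: (mem_lsum J (fun a => inf a w) (mem_head z [::])).
  exists [:: z]; split => //; by move=> i; rewrite inE => /eqP ->.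
have Hm : ixf x = m by rewrite /ixf eqxx.
have [g1 [Hg1 _]] := kleene J CL HE1 hix.
have [g2 [Hg2 _]] := kleene J CL HE2 hix.
have Heq := HTF inf g1 g2 Hg1 Hg2 y z Hy Hz.
exists (E2 y z (g2 y)); split; last first.
  rewrite -Heq; case: Hp => xs [-> _ Hxs Hl _].
  have Hmx := flow_in J Hg1.1 Hx (hix x Hx); rewrite Hm in Hmx.
  apply: (le_trans J (good_mono J (path_good HE1 z Hx Hxs) Hmx)).
  have := soundness J HE1 Hg1.1 z Hx Hxs; by rewrite Hl.
split.
  move=> v [l [_ Hl ->]]; apply: (lsum_le J) => q Hq.
  have [xs [-> _ Hxs Hl2 _]] := Hl q Hq.
  have Hmx := flow_in J Hg2.1 Hx (hix x Hx); rewrite Hm in Hmx.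
  apply: (le_trans J (good_mono J (path_good HE2 z Hx Hxs) Hmx)).
  have := soundness J HE2 Hg2.1 z Hx Hxs; by rewrite Hl2.
move=> u Hu.
have H : Rp add X E2 y z u y (g2 y).
  apply: (main_bound J CL HE2 Hg2) => //; last first.
    move=> w' w v Hw' _; exact: Rp_step.
  move=> w ix Hw Hi; rewrite (lub_unique J Hi (hix w Hw)) /ixf.
  case: eqP => [->|_].
    move=> q Hq.
    apply: (le_trans J (mem_lsum J (fun q => E_path E2 q m) (mem_head q [::]))).
    apply: Hu; exists [:: q]; split => //; by move=> i; rewrite inE => /eqP ->.
  move=> q Hq; rewrite (is_path_good HE2 Hq).2.2; exact: (le0 J).
apply: (H [:: y; z]); by exists [::].
Qed.

Theorem theorem4 (M : Type) (add : M -> M -> M) (zero : M)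
    (h1 h2 : flow_graph M) :
  flow_monoid add zero ->
  idempotent_add add ->
  fg_X h1 = fg_X h2 ->
  (forall x z, x \in fg_X h1 ->
     continuous_fun add (fg_E h1 x z) /\ distributive_fun add zero (fg_E h1 x z)) ->
  (forall x z, x \in fg_X h2 ->
     continuous_fun add (fg_E h2 x z) /\ distributive_fun add zero (fg_E h2 x z)) ->
  (tf_eq add zero h1 h2 <->
   path_replacement add zero h1 h2 /\ path_replacement add zero h2 h1).
Proof.
move=> [A [C Z] An CL _] I HX H1 H2.
have J : JSL add zero by split.
case: h1 h2 HX H1 H2 => [X E1 in1] [X2 E2 in2] /= <- H1 H2.
have HE1 : forall a b, a \in X -> good add zero (E1 a b) by move=> a b Ha; exact: H1.
have HE2 : forall a b, a \in X -> good add zero (E2 a b) by move=> a b Ha; exact: H2.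
rewrite /tf_eq /path_replacement /in_Out /=; split.
  move=> HTF; split.
    move=> x y z p [Hx _] Hy Hz Hp; exact: (tf_pr J CL HE1 HE2 HTF Hx Hy Hz Hp).
  move=> x y z p [Hx _] Hy Hz Hp; apply: (tf_pr J CL HE2 HE1 _ Hx Hy Hz Hp).
  move=> inf f1 f2 Hf1 Hf2 x' y' Hx' Hy'; symmetry; exact: (HTF _ _ _ Hf2 Hf1 _ _ Hx' Hy').
move=> [P12 P21] inf f1 f2 Hf1 Hf2 x y Hx Hy; apply: An.
  apply: (dir_le J CL HE1 HE2 Hf1 Hf2 _ Hx Hy).
  move=> w y' z' p Hw Ho Hy' Hz' Hp; exact: (P12 w y' z' p (conj Hw Ho) Hy' Hz' Hp).
apply: (dir_le J CL HE2 HE1 Hf2 Hf1 _ Hx Hy).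
move=> w y' z' p Hw Ho Hy' Hz' Hp; exact: (P21 w y' z' p (conj Hw Ho) Hy' Hz' Hp).
Qed.
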